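(* Let $\alpha=(\alpha_n)_{n\in\mathbb{Z}}\in(k^\times)^{\mathbb{Z}}$, $\beta=(\beta_n)_{n\in\mathbb{Z}}\in k^{\mathbb{Z}}$, $r\in\mathbb{Z}$ and $s>1$. Then $$(\phi_\alpha\theta_r)\,\phi^{(s)}_\beta\,(\phi_\alpha\theta_r)^{-1}=\phi^{(s)}_{\alpha^{-1}\alpha^{-1}[1]\cdots\alpha^{-1}[s-1]\,\beta[-r]}.$$ In particular, $\phi_\alpha\phi^{(s)}_\beta\phi_\alpha^{-1}=\phi^{(s)}_{\alpha^{-1}\alpha^{-1}[1]\cdots\alpha^{-1}[s-1]\,\beta}$.
   Context: Let $k$ be a field and $0\neq q\in k$ not a root of unity. $H=k_q[x,x^{-1},y]$ is the $k$-algebra generated by $x,x^{-1},y$ with $xx^{-1}=x^{-1}x=1$, $yx=qxy$; $\{x^ny^m:n\in\mathbb{Z},m\in\mathbb{N}\}$ is a $k$-basis. For sequences in $k^{\mathbb{Z}}$ operations are componentwise; $\alpha^{-1}=(\alpha_n^{-1})_n$ and $\gamma[r]$ denotes the sequence with $\gamma[r]_n=\gamma_{n+r}$. $\theta_r$ is the linear map $x^ny^m\mapsto x^{n+r}y^m$; $\phi_\alpha$ is the linear map with $\phi_\alpha(x^n)=x^n$, $\phi_\alpha(x^ny^m)=(\prod_{i=0}^{m-1}\alpha_{n+i})x^ny^m$ for $m\ge1$. Let $(j)_q=1+q+\dots+q^{j-1}$, $(j)!_q=(j)_q\cdots(1)_q$, $\binom{m}{i}_q=\frac{(m)!_q}{(i)!_q(m-i)!_q}$,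 $\binom{m}{s}_{q,i}=\prod_{j=0}^{i-1}\binom{m-js}{s}_q$, and for $\beta\in k^{\mathbb{Z}}$, $\beta_{n,s;0}=1$, $\beta_{n,s;i}=\prod_{j=0}^{i-1}\beta_{n+js}$. For $s\ge2$, $\phi^{(s)}_\beta$ is the linear map $H\to H$ with $\phi^{(s)}_\beta(x^ny^m)=x^ny^m$ for $0\le m<s$ and, for $m\geq s$, $\phi^{(s)}_\beta(x^ny^m)=x^ny^m+\sum_{1\le i\le\lfloor m/s\rfloor}\binom{m}{s}_{q,i}\big(\beta_{n,s;i}x^{n+is}-\beta_{n,s;i-1}\beta_{n+m-s}x^{n+is-s}\big)y^{m-is}$. *)

(* Defs.v *)
From HB Require Import structures.
From mathcomp Require Import all_boot all_order all_algebra.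
From mathcomp Require Import finmap.
From mathcomp.multinomials Require Import monalg.
Set Implicit Arguments. Unset Strict Implicit. Unset Printing Implicit Defensive.
Import Order.TTheory GRing.Theory Num.Theory.
Local Open Scope ring_scope.

(* Underlying k-vector space of H = k_q[x,x^-1,y]: the free k-module on the
   basis {x^n y^m : n in Z, m in N}; the pair (n,m) stands for x^n y^m. *)
Definition Hsp (k : fieldType) := {malg k[(int * nat)%type]}.

Definition xy (k : fieldType) (n : int) (m : nat) : Hsp k := << (n, m) >>.

Definition linext (k : fieldType) (F : int -> nat -> Hsp k) (g : Hsp k) : Hsp k :=
  \sum_(b <- msupp g) g@_b *: F b.1 b.2.

Definition qint (k : fieldType) (q : k) (j : nat) : k := \sum_(i < j) q ^+ i.
Definition qfact (k : fieldType) (q : k) (j : nat) : k := \prod_(i < j) qint q i.+1.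
Definition qbinom (k : fieldType) (q : k) (m i : nat) : k :=
  qfact q m / (qfact q i * qfact q (m - i)).
Definition qbinomi (k : fieldType) (q : k) (m s i : nat) : k :=
  \prod_(j < i) qbinom q (m - j * s) s.
Definition bprod (k : fieldType) (beta : int -> k) (n : int) (s i : nat) : k :=
  \prod_(j < i) beta (n + (j * s)%N%:Z).

Definition theta (k : fieldType) (r : int) : Hsp k -> Hsp k :=
  linext (fun n m => xy k (n + r) m).

Definition phia (k : fieldType) (alpha : int -> k) : Hsp k -> Hsp k :=
  linext (fun n m => (\prod_(i < m) alpha (n + i%:Z)) *: xy k n m).

Definition phis (k : fieldType) (q : k) (s : nat) (beta : int -> k) : Hsp k -> Hsp k :=
  linext (fun n m =>
    if (m < s)%N then xy k n m
    else xy k n m +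
      \sum_(1 <= i < (m %/ s).+1)
        qbinomi q m s i *:
          (bprod beta n s i *: xy k (n + (i * s)%N%:Z) (m - i * s)
           - (bprod beta n s i.-1 * beta (n + m%:Z - s%:Z))
               *: xy k (n + (i * s)%N%:Z - s%:Z) (m - i * s))).

Definition conjseq (k : fieldType) (alpha beta : int -> k) (s : nat) (r : int)
  : int -> k :=
  fun n => (\prod_(j < s) (alpha (n + j%:Z))^-1) * beta (n - r).

(* Main.v *)
Require Import Defs.
From HB Require Import structures.
From mathcomp Require Import all_boot all_order all_algebra.
From mathcomp Require Import finmap.
From mathcomp.multinomials Require Import monalg.
From mathcomp Require Import ring zify.
Import Order.TTheory GRing.Theory Num.Theory.
Local Open Scope ring_scope.
Set Implicit Arguments. Unset Strict Implicit. Unset Printing Implicit Defensive.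

Section L.
Variable k : fieldType.
Implicit Types (g u v : Hsp k) (F : int -> nat -> Hsp k).

Definition islin (L : Hsp k -> Hsp k) := forall a u v, L (a *: u + v) = a *: L u + L v.

Lemma linextEw F g (d : {fset (int * nat)}) : (msupp g `<=` d)%fset ->
  linext F g = \sum_(b <- d) g@_b *: F b.1 b.2.
Proof.
move=> le; rewrite /linext [LHS](big_fset_incl _ le) => //= x xd /mcoeff_outdom ->.
by rewrite scale0r.
Qed.

Lemma sub1 (a : k) u v : (msupp (a *: u + v) `<=` msupp u `|` msupp v)%fset.
Proof.
apply: (fsubset_trans (msuppD_le _ _)).
apply/fsubsetP => x; rewrite !inE => /orP [/(fsubsetP (msuppZ_le _ _)) -> //|->].
by rewrite orbT.
Qed.
Lemma islin_linext F : islin (linext F).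
Proof.
move=> a u v.
rewrite (@linextEw F (a *: u + v) (msupp u `|` msupp v)%fset) ?sub1 //.
rewrite (@linextEw F u (msupp u `|` msupp v)%fset) ?fsubsetUl //.
rewrite (@linextEw F v (msupp u `|` msupp v)%fset) ?fsubsetUr //.
rewrite scaler_sumr -big_split /=; apply: eq_bigr => b _.
by rewrite mcoeffD mcoeffZ scalerDl scalerA.
Qed.
Lemma linext_xy F n m : linext F (xy k n m) = F n m.
Proof.
rewrite /linext /xy msuppU oner_eq0 big_seq_fset1 mcoeffUU scale1r //.
Qed.

Section Lin.
Variable L : Hsp k -> Hsp k.
Hypothesis hL : islin L.
Lemma lin0 : L 0 = 0.
Proof.
have := hL 1 0 0; rewrite !scale1r addr0 => h.
by apply: (addrI (L 0)); rewrite addr0 -h.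
Qed.
Lemma linZ a u : L (a *: u) = a *: L u.
Proof. by have := hL a u 0; rewrite !addr0 lin0 addr0. Qed.
Lemma linD u v : L (u + v) = L u + L v.
Proof. by have := hL 1 u v; rewrite !scale1r. Qed.
Lemma linN u : L (- u) = - L u.
Proof. by have := hL (-1) u 0; rewrite !addr0 lin0 addr0 !scaleN1r. Qed.
Lemma linB u v : L (u - v) = L u - L v.
Proof. by rewrite linD linN. Qed.
Lemma lin_sum (I : Type) (s : seq I) (P : pred I) (f : I -> Hsp k) :
  L (\sum_(i <- s | P i) f i) = \sum_(i <- s | P i) L (f i).
Proof.
elim: s => [|x s IH]; first by rewrite !big_nil lin0.
by rewrite !big_cons; case: (P x); rewrite ?linD IH.
Qed.
Lemma lin_basis g : L g = \sum_(b <- msupp g) g@_b *: L (xy k b.1 b.2).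
Proof.
rewrite {1}(monalgE g) lin_sum; apply: eq_bigr => [[n m]] _ /=.
rewrite -linZ; congr L; apply/malgP => b.
by rewrite mcoeffZ /xy !mcoeffU mulr_natr.
Qed.
End Lin.

Lemma lin_eq L1 L2 : islin L1 -> islin L2 -> (forall n m, L1 (xy k n m) = L2 (xy k n m)) ->
  L1 =1 L2.
Proof.
move=> h1 h2 e g; rewrite (lin_basis h1) (lin_basis h2).
by apply: eq_bigr => b _; rewrite e.
Qed.

Lemma islin_comp L1 L2 : islin L1 -> islin L2 -> islin (L1 \o L2).
Proof. by move=> h1 h2 a u v /=; rewrite h2 h1. Qed.
Lemma islin_id : islin id. Proof. by []. Qed.
End L.
Section Gen.
Variable k : fieldType.
Variable V : lmodType k.
Definition islinV (L : V -> V) := forall a u v, L (a *: u + v) = a *: L u + L v.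
Section Lin.
Variable L : V -> V.
Hypothesis hL : islinV L.
Lemma vlin0 : L 0 = 0.
Proof.
have := hL 1 0 0; rewrite !scale1r addr0 => h.
by apply: (addrI (L 0)); rewrite addr0 -h.
Qed.
Lemma vlinZ a u : L (a *: u) = a *: L u.
Proof. by have := hL a u 0; rewrite !addr0 vlin0 addr0. Qed.
Lemma vlinD u v : L (u + v) = L u + L v.
Proof. by have := hL 1 u v; rewrite !scale1r. Qed.
Lemma vlinN u : L (- u) = - L u.
Proof. by have := hL (-1) u 0; rewrite !addr0 vlin0 addr0 !scaleN1r. Qed.
Lemma vlinB u v : L (u - v) = L u - L v.
Proof. by rewrite vlinD vlinN. Qed.
Lemma vlin_sum (I : Type) (s : seq I) (P : pred I) (f : I -> V) :
  L (\sum_(i <- s | P i) f i) = \sum_(i <- s | P i) L (f i).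
Proof.
elim: s => [|x s IH]; first by rewrite !big_nil vlin0.
by rewrite !big_cons; case: (P x); rewrite ?vlinD IH.
Qed.
End Lin.

Definition phisF (q : k) (s : nat) (b : int -> k) (e : int -> nat -> V) n m :=
    if (m < s)%N then e n m
    else e n m +
      \sum_(1 <= i < (m %/ s).+1)
        qbinomi q m s i *:
          (bprod b n s i *: e (n + (i * s)%N%:Z) (m - i * s)%N
           - (bprod b n s i.-1 * b (n + m%:Z - s%:Z))
               *: e (n + (i * s)%N%:Z - s%:Z) (m - i * s)%N).

Lemma fin (p Q A1 A2 C1 C2 B1 B2 : k) (u1 u2 u1' u2' : V) : u1 = u1' -> u2 = u2' -> p * (A1 * C1) = B1 -> p * (A2 * C2) = B2 ->
  p *: (Q *: (A1 *: (C1 *: u1) - A2 *: (C2 *: u2))) = Q *: (B1 *: u1' - B2 *: u2').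
Proof.
move=> -> -> <- <-; rewrite !scalerBr !scalerA; congr (_ *: _ - _ *: _); ring.
Qed.
End Gen.

Section Abs.
Variable k : fieldType.
Variables (q : k) (alpha beta : int -> k) (r : int) (s : nat).
Hypothesis halpha : forall n, alpha n != 0.

Definition P (n : int) (m : nat) : k := \prod_(i < m) alpha (n + i%:Z).

Lemma P_neq0 n m : P n m != 0.
Proof. by rewrite /P; apply/prodf_neq0 => i _. Qed.

Lemma Padd n a b : P n (a + b) = P n a * P (n + a%:Z) b.
Proof.
rewrite /P big_split_ord /=; congr (_ * _); apply: eq_bigr => i _.
by rewrite /= PoszD addrA.
Qed.

Lemma conjseqE x : conjseq alpha beta s r x = (P x s)^-1 * beta (x - r).
Proof. by rewrite /conjseq /P prodfV. Qed.

Lemma bprod_conj n i : bprod (conjseq alpha beta s r) n s i = (P n (i * s))^-1 * bprod beta (n - r) s i.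
Proof.
elim: i => [|i IH]; first by rewrite /bprod !big_ord0 mul0n /P big_ord0 invr1 mulr1.
rewrite /bprod !big_ord_recr /= -/(bprod _ _ _ _) IH conjseqE mulSn addnC Padd invfM.
have -> : n + (i * s)%N - r = n - r + (i * s)%N by rewrite addrAC.
by rewrite -/(bprod _ _ _ _); ring.
Qed.

Variables (V : lmodType k) (e : int -> nat -> V) (Tm Ph Ph' G : V -> V).
Hypothesis hT : islinV Tm.
Hypothesis hPh : islinV Ph.
Hypothesis hTe : forall n m, Tm (e n m) = P (n + r) m *: e (n + r) m.
Hypothesis hG : forall n m, G (e n m) = (P n m)^-1 *: e (n - r) m.
Hypothesis hPhe : forall n m, Ph (e n m) = phisF q s beta e n m.
Hypothesis hPh'e : forall n m, Ph' (e n m) = phisF q s (conjseq alpha beta s r) e n m.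

Lemma conj_abs n m : Tm (Ph (G (e n m))) = Ph' (e n m).
Proof.
rewrite hG (vlinZ hPh) hPhe hPh'e /phisF.
case: (ltnP m s) => hms.
  by rewrite (vlinZ hT) hTe subrK scalerA mulVf ?P_neq0 // scale1r.
rewrite (vlinZ hT) (vlinD hT) hTe subrK scalerDr scalerA mulVf ?P_neq0 // scale1r.
congr (_ + _).
rewrite (vlin_sum hT) scaler_sumr; apply: eq_big_nat => i /andP [hi1 hi2].
rewrite (vlinZ hT) (vlinB hT) !(vlinZ hT) !hTe.
have e1 : n - r + (i * s)%N%:Z + r = n + (i * s)%N%:Z by ring.
have e2 : n - r + (i * s)%N%:Z - s%:Z + r = n + (i * s)%N%:Z - s%:Z by ring.
have his : (i * s <= m)%N.
  apply: leq_trans (leq_trunc_div m s); rewrite leq_mul2r; rewrite ltnS in hi2.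
  by rewrite hi2 orbT.
apply: fin; rewrite ?e1 ?e2 //.
  have Pm : P n m = P n (i * s) * P (n + (i * s)%N%:Z) (m - i * s) by rewrite -Padd subnKC.
  rewrite bprod_conj Pm; field.
  by rewrite !P_neq0.
case: i hi1 hi2 e1 e2 his => // j _ _ _ _.
rewrite mulSnr /= => his.
set d := (m - (j * s + s))%N.
have hm : m = (j * s + d + s)%N by rewrite /d; lia.
have Pm : P n m = P n (j * s) * P (n + (j * s)%N%:Z) d * P (n + (j * s)%N%:Z + d%:Z) s.
  by rewrite {1}hm !Padd PoszD addrA.
have hmZ : m%:Z = (j * s)%N%:Z + d%:Z + s%:Z by rewrite {1}hm !PoszD.
have h4 : n + (j * s + s)%N%:Z - s%:Z = n + (j * s)%N%:Z by rewrite PoszD addrA addrK.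
have h5 : n - r + ((j * s)%N%:Z + d%:Z + s%:Z) - s%:Z = n + (j * s)%N%:Z + d%:Z - r by ring.
have h6 : n + ((j * s)%N%:Z + d%:Z + s%:Z) - s%:Z = n + (j * s)%N%:Z + d%:Z by ring.
rewrite h4 Pm hmZ h5 conjseqE h6 bprod_conj /=; field.
by rewrite !P_neq0.
Qed.
End Abs.

Section Main.
Variable k : fieldType.
Variables (q : k) (alpha : int -> k).
Hypothesis halpha : forall n, alpha n != 0.

Lemma islin_eq (L : Hsp k -> Hsp k) : islinV L -> islin L.
Proof. by []. Qed.
Lemma islinV_eq (L : Hsp k -> Hsp k) : islin L -> islinV L.
Proof. by []. Qed.

Lemma T_xy r n m : (phia alpha \o theta r) (xy k n m) = P alpha (n + r) m *: xy k (n + r) m.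
Proof. by rewrite /= /theta linext_xy /phia linext_xy. Qed.

Lemma islin_T r : islin (phia alpha \o theta r).
Proof. apply: islin_comp; exact: islin_linext. Qed.

Definition G0 r := linext (fun n m => (P alpha n m)^-1 *: xy k (n - r) m).

Lemma G0_xy r n m : G0 r (xy k n m) = (P alpha n m)^-1 *: xy k (n - r) m.
Proof. by rewrite /G0 linext_xy. Qed.

Lemma G0_Z r a u : G0 r (a *: u) = a *: G0 r u.
Proof. exact: (linZ (islin_linext _)). Qed.

Lemma phis_xy s b n m : phis q s b (xy k n m) = phisF q s b (xy k) n m.
Proof. by rewrite /phis linext_xy. Qed.

Lemma G0T r : cancel (phia alpha \o theta r) (G0 r).
Proof.
apply: (@lin_eq _ (G0 r \o (phia alpha \o theta r)) id).
- apply: islin_comp; [exact: islin_linext | exact: islin_T].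
- exact: islin_id.
move=> n m /=. rewrite -/((phia alpha \o theta r) (xy k n m)) T_xy.
rewrite G0_Z G0_xy scalerA mulfV ?P_neq0 // scale1r.
by rewrite addrK.
Qed.

Lemma TG0 r : cancel (G0 r) (phia alpha \o theta r).
Proof.
apply: (@lin_eq _ ((phia alpha \o theta r) \o G0 r) id).
- apply: islin_comp; [exact: islin_T | exact: islin_linext].
- exact: islin_id.
move=> n m /=. rewrite G0_xy.
rewrite -/((phia alpha \o theta r) _) (linZ (islin_T r)) T_xy subrK scalerA mulVf ?P_neq0 // scale1r.
done.
Qed.

End Main.
Section Main2.
Variable k : fieldType.
Variables (q : k) (alpha : int -> k).
Hypothesis halpha : forall n, alpha n != 0.
Lemma islin_comp3 (A B C : Hsp k -> Hsp k) : islin A -> islin B -> islin C -> islin (fun y => A (B (C y))).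
Proof. by move=> ha hb hc a u v; rewrite hc hb ha. Qed.
Lemma islin_phis s b : islin (phis q s b).
Proof. exact: islin_linext. Qed.
Lemma islin_G0 r : islin (G0 alpha r).
Proof. exact: islin_linext. Qed.

Lemma part2 (beta : int -> k) r s G :
  cancel (phia alpha \o theta r) G -> cancel G (phia alpha \o theta r) ->
  (phia alpha \o theta r) \o phis q s beta \o G =1 phis q s (conjseq alpha beta s r).
Proof.
move=> h1 h2 x.
have hG : G x = G0 alpha r x.
  Timeout 10 rewrite -{1}(TG0 halpha r x). Timeout 10 rewrite h1. Timeout 10 done.
Timeout 10 change ((phia alpha \o theta r) (phis q s beta (G x)) = phis q s (conjseq alpha beta s r) x).
Timeout 10 rewrite hG.
have L1 : islin (fun y => (phia alpha \o theta r) (phis q s beta (G0 alpha r y))).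
  exact: (islin_comp3 (islin_T alpha r) (islin_phis s beta) (islin_G0 r)).
have L2 : islin (phis q s (conjseq alpha beta s r)) by exact: (islin_phis s _).
have B : forall n m, (fun y => (phia alpha \o theta r) (phis q s beta (G0 alpha r y))) (xy k n m) = phis q s (conjseq alpha beta s r) (xy k n m).
  move=> n m.
  Timeout 10 exact: (@conj_abs k q alpha beta r s halpha (Hsp k) (xy k)
         (phia alpha \o theta r) (phis q s beta) (phis q s (conjseq alpha beta s r)) (G0 alpha r)
         (islin_T alpha r) (islin_phis s beta) (T_xy alpha r) (G0_xy alpha r) (phis_xy q s beta) (phis_xy q s _) n m).
Timeout 10 exact: (lin_eq L1 L2 B x).
Qed.
End Main2.

Lemma compE (X : Type) (A B : X -> X) x : (A \o B) x = A (B x).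
Proof. by []. Qed.
Lemma fin3 (X : Type) (A Th Ph G : X -> X) : Th =1 id -> (A \o Ph \o G) =1 ((A \o Th) \o Ph \o G).
Proof. by move=> h x /=; rewrite h. Qed.
Lemma c1lem (X : Type) (A Th G : X -> X) : Th =1 id -> cancel A G -> cancel (A \o Th) G.
Proof. by move=> h c x /=; rewrite h. Qed.
Lemma c2lem (X : Type) (A Th G : X -> X) : Th =1 id -> cancel G A -> cancel G (A \o Th).
Proof. by move=> h c x /=; rewrite h. Qed.
Lemma theta0 (k : fieldType) : theta (k:=k) 0 =1 id.
Proof.
apply: lin_eq; [exact: islin_linext | exact: islin_id |].
by move=> n m; rewrite /theta linext_xy addr0.
Qed.

Theorem lemma3p16 (k : fieldType) (q : k) (hq0 : q != 0)
  (hqroot : forall n : nat, (0 < n)%N -> q ^+ n != 1)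
  (alpha beta : int -> k) (r : int) (s : nat)
  (halpha : forall n, alpha n != 0) (hs : (1 < s)%N) :
  (exists G : Hsp k -> Hsp k,
      cancel (phia alpha \o theta r) G /\ cancel G (phia alpha \o theta r)) /\
  (forall G : Hsp k -> Hsp k,
      cancel (phia alpha \o theta r) G -> cancel G (phia alpha \o theta r) ->
      (phia alpha \o theta r) \o phis q s beta \o G
        =1 phis q s (conjseq alpha beta s r)) /\
  (forall G : Hsp k -> Hsp k,
      cancel (phia alpha) G -> cancel G (phia alpha) ->
      phia alpha \o phis q s beta \o G =1 phis q s (conjseq alpha beta s 0)).
Proof.
split.
  exists (G0 alpha r); split; [exact: (G0T halpha r) | exact: (TG0 halpha r)].
split.
  move=> G h1 h2; exact: (@part2 k q alpha halpha beta r s G h1 h2).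
move=> G h1 h2 x.
have H := @part2 k q alpha halpha beta 0 s G (@c1lem _ (phia alpha) (theta 0) G (@theta0 k) h1) (@c2lem _ (phia alpha) (theta 0) G (@theta0 k) h2).
exact: (etrans (@fin3 _ (phia alpha) (theta 0) (phis q s beta) G (@theta0 k) x) (H x)).
Qed.
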